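(* Let $n\ge 4$. The number of semimagic quad squares using the EvenQuads-$2^n$ deck equals $2^n(2^n-1)(2^n-2)(2^n-4)(2^n-8)$ times the number of semimagic quad squares of type C in that deck. The same holds with ''semimagic'' replaced by ''magic'', and with ''semimagic'' replaced by ''strongly magic''.
   Context: The EvenQuads-$2^n$ deck consists of $2^n$ cards identified with the integers $0,1,\dots,2^n-1$ (equivalently, via binary expansion, with the vectors of $\mathbb{Z}_2^n$). Four cards $a,b,c,d$ form a quad if and only if $a\oplus b\oplus c\oplus d=0$, where $\oplus$ denotes bitwise XOR. A quad square is a $4\times 4$ array of $16$ pairwise distinct cards of the deck. It is semimagic if each of its four rows and each of its four columns forms a quad; it is magic if, in addition, each of its two diagonals forms a quad. Index rows and columns by $0,1,2,3$; a quad square is strongly magic if for any four distinct positions $(i_1,j_1),\dots,(i_4,j_4)$ with $i_1\oplus i_2\oplus i_3\oplus i_4=0$ and $j_1\oplus j_2\oplus j_3\oplus j_4=0$, the four cards in these positions form a quad. A quad square is of type C if its first row is $0,1,2,3$ (left to right) and its first column is $0,4,8,12$ (top to bottom). *)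

(* Defs.v *)
From Stdlib Require Import PeanoNat.
From mathcomp Require Import all_boot.
Set Implicit Arguments. Unset Strict Implicit. Unset Printing Implicit Defensive.

Definition card (n : nat) := 'I_(2 ^ n).

Definition is_quad (a b c d : nat) : bool :=
  Nat.lxor (Nat.lxor (Nat.lxor a b) c) d == 0.

Definition pos := ('I_4 * 'I_4)%type.

Definition array4 (n : nat) := {ffun pos -> card n}.

Definition quad_square n (Q : array4 n) : bool := injectiveb Q.

Definition entry n (Q : array4 n) (i j : 'I_4) : nat := val (Q (i, j)).

Definition o0 : 'I_4 := @Ordinal 4 0 isT.
Definition o1 : 'I_4 := @Ordinal 4 1 isT.
Definition o2 : 'I_4 := @Ordinal 4 2 isT.
Definition o3 : 'I_4 := @Ordinal 4 3 isT.

Definition rows_quads n (Q : array4 n) : bool :=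
  [forall i : 'I_4, is_quad (entry Q i o0) (entry Q i o1) (entry Q i o2) (entry Q i o3)].

Definition cols_quads n (Q : array4 n) : bool :=
  [forall j : 'I_4, is_quad (entry Q o0 j) (entry Q o1 j) (entry Q o2 j) (entry Q o3 j)].

Definition semimagic n (Q : array4 n) : bool :=
  quad_square Q && rows_quads Q && cols_quads Q.

Definition diags_quads n (Q : array4 n) : bool :=
  is_quad (entry Q o0 o0) (entry Q o1 o1) (entry Q o2 o2) (entry Q o3 o3) &&
  is_quad (entry Q o0 o3) (entry Q o1 o2) (entry Q o2 o1) (entry Q o3 o0).

Definition magic n (Q : array4 n) : bool := semimagic Q && diags_quads Q.

Definition strongly_magic n (Q : array4 n) : bool :=
  quad_square Q &&
  [forall p1 : pos, forall p2 : pos, forall p3 : pos, forall p4 : pos,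
     (uniq [:: p1; p2; p3; p4] &&
      is_quad (val p1.1) (val p2.1) (val p3.1) (val p4.1) &&
      is_quad (val p1.2) (val p2.2) (val p3.2) (val p4.2)) ==>
     is_quad (val (Q p1)) (val (Q p2)) (val (Q p3)) (val (Q p4))].

Definition typeC n (Q : array4 n) : bool :=
  [forall j : 'I_4, entry Q o0 j == val j] &&
  [forall i : 'I_4, entry Q i o0 == 4 * val i].

(* Main.v *)
From Stdlib Require Import PeanoNat Lia.
From mathcomp Require Import all_boot.
Require Import Defs.
Set Implicit Arguments. Unset Strict Implicit. Unset Printing Implicit Defensive.

Lemma expn_pow m k : m ^ k = Nat.pow m k.
Proof. elim: k => [|k IH] //=. by rewrite expnS IH mulnE. Qed.

Lemma lt_pow_bits a k : a < 2 ^ k <-> (forall i, k <= i -> Nat.testbit a i = false).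
Proof.
rewrite expn_pow; split.
- move=> /ltP H i /leP Hi. apply/Nat.testbit_false.
  rewrite Nat.div_small //. apply: Nat.lt_le_trans H _. by apply: Nat.pow_le_mono_r.
- move=> H. have -> : a = a mod Nat.pow 2 k.
    apply: Nat.bits_inj => i. case: (Nat.lt_ge_cases i k) => Hi.
    + by rewrite Nat.mod_pow2_bits_low.
    + by rewrite Nat.mod_pow2_bits_high // H //; apply/leP.
  apply/ltP. apply: Nat.mod_upper_bound. by apply: Nat.pow_nonzero.
Qed.

Lemma lxor_lt a b k : a < 2 ^ k -> b < 2 ^ k -> Nat.lxor a b < 2 ^ k.
Proof.
move=> /lt_pow_bits Ha /lt_pow_bits Hb; apply/lt_pow_bits => i Hi.
by rewrite Nat.lxor_spec Ha // Hb.
Qed.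

Lemma quad_bits a b c d : is_quad a b c d <->
  (forall i, xorb (xorb (xorb (Nat.testbit a i) (Nat.testbit b i)) (Nat.testbit c i)) (Nat.testbit d i) = false).
Proof.
rewrite /is_quad; split.
- move/eqP=> H i. by rewrite -!Nat.lxor_spec H Nat.bits_0.
- move=> H; apply/eqP; apply: Nat.bits_inj => i. by rewrite !Nat.lxor_spec H Nat.bits_0.
Qed.

Lemma quadE a b c d : is_quad a b c d = (d == Nat.lxor (Nat.lxor a b) c).
Proof.
rewrite /is_quad; apply/eqP/eqP => [/Nat.lxor_eq_0_iff -> //|->].
by apply/Nat.lxor_eq_0_iff.
Qed.

Ltac bitify i :=
  repeat match goal with H : @eq nat _ _ |- _ =>
    move/(f_equal (fun z => Nat.testbit z i)): H; cbv beta; rewrite ?Nat.lxor_spec => H end.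

Ltac bcases i :=
  repeat match goal with
  | |- context [Nat.testbit ?x i] => destruct (Nat.testbit x i)
  | H : context [Nat.testbit ?x i] |- _ => destruct (Nat.testbit x i)
  end.

Ltac bsolve := apply: Nat.bits_inj; let i := fresh "i" in intro i; bitify i; rewrite ?Nat.lxor_spec;
  bcases i; simpl in *; congruence.

Definition tv (j v x : nat) := if Nat.testbit x j then Nat.lxor x v else x.

Lemma tv_bits j v x i : Nat.testbit (tv j v x) i =
  xorb (Nat.testbit x i) (Nat.testbit x j && Nat.testbit v i).
Proof. rewrite /tv; case: (Nat.testbit x j); rewrite ?Nat.lxor_spec ?andTb ?andFb //; by case: (Nat.testbit x i). Qed.

Lemma tv_inv j v x : Nat.testbit v j = false -> tv j v (tv j v x) = x.
Proof.
move=> Hv; apply: Nat.bits_inj => i; rewrite !tv_bits Hv.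
by case: (Nat.testbit x i); case: (Nat.testbit x j); case: (Nat.testbit v i).
Qed.

Lemma tv_quad j v a b c d : Nat.testbit v j = false -> is_quad a b c d ->
  is_quad (tv j v a) (tv j v b) (tv j v c) (tv j v d).
Proof.
move=> Hv /quad_bits H; apply/quad_bits => i; rewrite !tv_bits.
move: (H i) (H j); bcases i; bcases j; by [].
Qed.

Lemma tv_lt k j v x : v < 2 ^ k -> x < 2 ^ k -> tv j v x < 2 ^ k.
Proof. rewrite /tv; case: (Nat.testbit x j) => // Hv Hx; exact: lxor_lt. Qed.

Definition tr (v x : nat) := Nat.lxor x v.
Lemma tr_inv v x : tr v (tr v x) = x.
Proof. rewrite /tr; bsolve. Qed.
Lemma tr_quad v a b c d : is_quad a b c d -> is_quad (tr v a) (tr v b) (tr v c) (tr v d).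
Proof.
move=> /quad_bits H; apply/quad_bits => i; rewrite /tr !Nat.lxor_spec.
move: (H i); bcases i; by [].
Qed.

Definition good n (g : card n -> card n) :=
  injective g /\ forall a b c d : card n, is_quad (g a) (g b) (g c) (g d) = is_quad a b c d.

Definition liftc n (f : nat -> nat) (Hf : forall x, x < 2 ^ n -> f x < 2 ^ n) : card n -> card n :=
  fun x => Ordinal (Hf _ (ltn_ord x)).

Lemma good_lift n f (Hf : forall x, x < 2 ^ n -> f x < 2 ^ n) :
  (forall x, f (f x) = x) ->
  (forall a b c d, is_quad a b c d -> is_quad (f a) (f b) (f c) (f d)) -> good (liftc Hf).
Proof.
move=> Hinv Hq; split.
- move=> x y /(congr1 val) /= E. apply: val_inj. by rewrite -[val x]Hinv E Hinv.
- move=> a b c d /=. apply/idP/idP; last exact: Hq.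
  by move/Hq; rewrite !Hinv.
Qed.

Lemma good_comp n (g h : card n -> card n) : good g -> good h -> good (g \o h).
Proof.
move=> [ig qg] [ih qh]; split; first exact: inj_comp.
by move=> a b c d /=; rewrite qg qh.
Qed.

Lemma good_inv n (g : card n -> card n) (H : good g) : good (invF (proj1 H)).
Proof.
have qg := proj2 H; split; first exact: can_inj (f_invF (proj1 H)).
by move=> a b c d; rewrite -qg !f_invF.
Qed.

Lemma pow_pos n : 0 < 2 ^ n.
Proof. by rewrite expn_gt0. Qed.

Definition cd n (m : nat) : card n := locked (cast_ord (prednK (pow_pos n)) (inord m)).

Lemma val_cd n m : m < 2 ^ n -> val (cd n m) = m.
Proof. move=> H; rewrite /cd -lock /= inordK // prednK //; exact: pow_pos. Qed.

Definition x3 n (a b c : card n) : card n :=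
  Ordinal (lxor_lt (lxor_lt (ltn_ord a) (ltn_ord b)) (ltn_ord c)).

Lemma quad_x3 n (a b c d : card n) : is_quad a b c d = (d == x3 a b c).
Proof. by rewrite quadE. Qed.

Lemma good_x3 n (g : card n -> card n) a b c : good g -> g (x3 a b c) = x3 (g a) (g b) (g c).
Proof.
case=> ig qg. apply/eqP; rewrite -quad_x3 qg quad_x3 //.
Qed.

Lemma pow_bit k i : Nat.testbit (2 ^ k) i = (k == i).
Proof. rewrite expn_pow Nat.pow2_bits_eqb; by case: (Nat.eqb_spec k i) => [->|/eqP/negbTE ->]; rewrite ?eqxx. Qed.

Lemma step1 n k (w : card n) : k < n -> Nat.testbit w k ->
  exists g, good g /\ g w = cd n (2 ^ k) /\ forall x : card n, x < 2 ^ k -> g x = x.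
Proof.
move=> kn wk.
have kl : 2 ^ k < 2 ^ n by rewrite ltn_exp2l.
pose v := Nat.lxor w (2 ^ k).
have vl : v < 2 ^ n by apply: lxor_lt.
have vk : Nat.testbit v k = false by rewrite /v Nat.lxor_spec wk pow_bit eqxx.
have Hf : forall x, x < 2 ^ n -> tv k v x < 2 ^ n by move=> x; apply: tv_lt.
exists (liftc Hf); split; [|split].
- apply: good_lift => [x|a b c d]; [exact: tv_inv | exact: tv_quad].
- apply: val_inj; rewrite val_cd // /= /tv wk /v. bsolve.
- move=> x /lt_pow_bits xk; apply: val_inj; by rewrite /= /tv xk.
Qed.

Lemma step n k (w : card n) : k < n -> 2 ^ k <= w ->
  exists g, good g /\ g w = cd n (2 ^ k) /\ forall x : card n, x < 2 ^ k -> g x = x.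
Proof.
move=> kn kw.
case wk: (Nat.testbit w k); first exact: step1.
case E: [exists j : 'I_n, (k <= j) && Nat.testbit w j]; last first.
  exfalso; move: kw; rewrite leqNgt => /negP; apply; apply/lt_pow_bits => i ki.
  case: (ltnP i n) => iN.
    apply/negP => wi; have := negbT E; rewrite negb_exists => /forallP /(_ (Ordinal iN)).
    by rewrite /= ki wi.
  by move: (ltn_ord w) => /lt_pow_bits; apply.
case/existsP: E => j /andP [kj wj].
have jk : j != k :> nat by apply/eqP => ej; rewrite -ej wj in wk.
have kl : 2 ^ k < 2 ^ n by rewrite ltn_exp2l.
have vj : Nat.testbit (2 ^ k) j = false by rewrite pow_bit eq_sym (negbTE jk).
have Hf : forall x, x < 2 ^ n -> tv j (2 ^ k) x < 2 ^ n by move=> x; apply: tv_lt.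
pose g1 := liftc Hf.
have g1w : Nat.testbit (g1 w) k by rewrite /= tv_bits wj wk pow_bit eqxx.
have [g2 [gg2 [g2w g2x]]] := step1 kn g1w.
exists (g2 \o g1); split; [|split].
- apply: good_comp => //; apply: good_lift => [x|a b c d]; [exact: tv_inv | exact: tv_quad].
- by [].
- move=> x xk /=. have -> : g1 x = x.
    apply: val_inj; rewrite /= /tv. move/lt_pow_bits: xk => ->; first by [].
    by apply: leq_trans kj; rewrite leqnn.
  exact: g2x.
Qed.

Arguments cd : simpl never.

Lemma vcd n m : 4 <= n -> m < 16 -> val (cd n m) = m.
Proof.
move=> hn hm; apply: val_cd; apply: leq_trans hm _.
by rewrite -[16]/(2 ^ 4) leq_exp2l.
Qed.

Definition T5 n := (card n * card n * card n * card n * card n)%type.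

Definition indep2 n (z : card n * card n) := z.2 \notin [:: z.1].
Definition indep3 n (z : card n * card n * card n) := indep2 z.1 && (z.2 \notin [:: z.1.1; z.1.2]).
Definition list4 n (z : card n * card n * card n) := [:: z.1.1; z.1.2; z.2; x3 z.1.1 z.1.2 z.2].
Definition indep4 n (z : card n * card n * card n * card n) := indep3 z.1 && (z.2 \notin list4 z.1).
Definition list8 n (z : card n * card n * card n * card n) :=
  let: (a, b, c, d) := z in
  [:: a; b; c; d; x3 a b c; x3 a b d; x3 a c d; x3 b c d].
Definition indep5 n (z : T5 n) := indep4 z.1 && (z.2 \notin list8 z.1).

Lemma card_notin n (s : seq (card n)) : uniq s -> #|[pred y | y \notin s]| = 2 ^ n - size s.
Proof.
move=> us; have := cardC (mem s); rewrite card_ord (card_uniqP us).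
have -> : #|[predC s]| = #|[pred y | y \notin s]| by apply: eq_card => y; rewrite !inE.
set m := #|_| => E.
have le : size s <= 2 ^ n by have := leq_addr m (size s); rewrite E.
apply: (@addnI (size s)); by rewrite subnKC.
Qed.

Lemma card_pair (A B : finType) (p : pred A) (q : A -> pred B) k :
  (forall x, p x -> #|q x| = k) -> #|[pred z : A * B | p z.1 && q z.1 z.2]| = #|p| * k.
Proof.
move=> H.
rewrite (_ : #|[pred z : A * B | p z.1 && q z.1 z.2]| = \sum_(z | p z.1 && q z.1 z.2) 1); last by rewrite sum1_card.
rewrite -(pair_big_dep p q (fun _ _ => 1)) /=.
rewrite (eq_bigr (fun _ => k)); last by move=> x px; rewrite sum1_card H.
by rewrite sum_nat_const.
Qed.

Ltac cardneq :=
  repeat match goal with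
  | H : is_true (_ && _) |- _ => case/andP: H => ? ?
  | H : is_true (~~ (_ || _)) |- _ => rewrite negb_or in H
  | H : is_true (?x != ?y) |- _ =>
      let H' := fresh "N" in
      have H' : val x <> val y := (fun E => (elimN eqP H) (val_inj E)); clear H; simpl in H'
  end.

Ltac neqgoal :=
  apply/eqP => /(congr1 val) /=;
  let E := fresh "E" in move=> E;
  match goal with H : ?u <> ?v |- False => apply: H; bsolve end.

Ltac splitgoal := repeat (apply/andP; split).

Lemma uniq4 n (z : card n * card n * card n) : indep3 z -> uniq (list4 z).
Proof.
case: z => [[a b] c]; rewrite /indep3 /indep2 /list4 /= ?inE => H.
cardneq; rewrite ?inE ?negb_or; splitgoal; try done; neqgoal.
Qed.

Lemma uniq8 n (z : card n * card n * card n * card n) : indep4 z -> uniq (list8 z).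
Proof.
case: z => [[[a b] c] d]; rewrite /indep4 /indep3 /indep2 /list4 /list8 /= ?inE => H.
cardneq; rewrite ?inE ?negb_or; splitgoal; try done; neqgoal.
Qed.

Lemma card_indep5 n : #|[pred t : T5 n | indep5 t]| =
  2 ^ n * (2 ^ n - 1) * (2 ^ n - 2) * (2 ^ n - 4) * (2 ^ n - 8).
Proof.
have H8 := @card_pair _ _ (@indep4 n) (fun z => [pred y | y \notin list8 z]) (2 ^ n - 8).
rewrite (eq_card (B := [pred z | indep4 z.1 && (fun z => [pred y | y \notin list8 z]) z.1 z.2])) //.
rewrite H8; last by move=> [[[a b] c] d] Hz; rewrite card_notin ?(uniq8 Hz).
congr (_ * _).
have H4 := @card_pair _ _ (@indep3 n) (fun z => [pred y | y \notin list4 z]) (2 ^ n - 4).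
rewrite (eq_card (B := [pred z | indep3 z.1 && (fun z => [pred y | y \notin list4 z]) z.1 z.2])) //.
rewrite H4; last by move=> z Hz; rewrite card_notin ?uniq4.
congr (_ * _).
have H2 := @card_pair _ _ (@indep2 n) (fun z => [pred y | y \notin [:: z.1; z.2]]) (2 ^ n - 2).
rewrite (eq_card (B := [pred z | indep2 z.1 && (fun z => [pred y | y \notin [:: z.1; z.2]]) z.1 z.2])) //.
rewrite H2; last first.
  move=> [a b]; rewrite /indep2 /= inE => H; by rewrite card_notin //= inE eq_sym H.
congr (_ * _).
have H1 := @card_pair _ _ (@predT (card n)) (fun z => [pred y | y \notin [:: z]]) (2 ^ n - 1).
rewrite (eq_card (B := [pred z | predT z.1 && (fun z => [pred y | y \notin [:: z]]) z.1 z.2])) //.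
rewrite H1; last by move=> z _; rewrite card_notin.
by rewrite card_ord.
Qed.

Definition gmap n (g : card n -> card n) (Q : array4 n) : array4 n := [ffun p => g (Q p)].
Definition Phi n (Q : array4 n) : T5 n :=
  ((((Q (o0, o0), Q (o0, o1)), Q (o0, o2)), Q (o1, o0)), Q (o2, o0)).
Definition map5 n (g : card n -> card n) (t : T5 n) : T5 n :=
  let: (a, b, c, d, e) := t in (g a, g b, g c, g d, g e).

Lemma Phi_gmap n g (Q : array4 n) : Phi (gmap g Q) = map5 g (Phi Q).
Proof. by rewrite /Phi /gmap !ffunE. Qed.

Lemma map5_inj n (g : card n -> card n) : injective g -> injective (map5 g).
Proof.
move=> ig [[[[a b] c] d] e] [[[[a' b'] c'] d'] e'] /= [].
by move=> /ig -> /ig -> /ig -> /ig -> /ig ->.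
Qed.

Lemma gmap_inj n (g : card n -> card n) : injective g -> injective (gmap g).
Proof.
move=> ig Q Q' E; apply/ffunP => p.
by apply: ig; move/ffunP: E => /(_ p); rewrite !ffunE.
Qed.

Lemma indep5_map n (g : card n -> card n) t : good g -> indep5 (map5 g t) = indep5 t.
Proof.
move=> gg; have [ig _] := gg.
case: t => [[[[a b] c] d] e].
rewrite /indep5 /indep4 /indep3 /indep2 /list4 /list8 /= -!(good_x3 _ _ _ gg).
by rewrite !inE !(inj_eq ig).
Qed.

Definition Pinv n (P : pred (array4 n)) :=
  forall g Q, good g -> P (gmap g Q) = P Q.

Lemma Finv n (P : pred (array4 n)) g t : Pinv P -> good g ->
  #|[pred Q | P Q && (Phi Q == map5 g t)]| = #|[pred Q | P Q && (Phi Q == t)]|.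
Proof.
move=> HP gg; have [ig _] := gg.
transitivity #|[set Q | P Q && (Phi Q == map5 g t)]|; first by apply: eq_card => Q; rewrite inE.
rewrite -(card_preimset _ (gmap_inj ig)); apply: eq_card => Q.
by rewrite !inE HP // Phi_gmap (inj_eq (map5_inj ig)).
Qed.

Lemma qs_gmap n g (Q : array4 n) : good g -> quad_square (gmap g Q) = quad_square Q.
Proof.
case=> ig qg; rewrite /quad_square; apply/injectiveP/injectiveP => H x y E.
- by apply: H; rewrite !ffunE E.
- by apply: H; apply: ig; move: E; rewrite !ffunE.
Qed.

Lemma rows_gmap n g (Q : array4 n) : good g -> rows_quads (gmap g Q) = rows_quads Q.
Proof. case=> ig qg; rewrite /rows_quads /entry; apply: eq_forallb => i; by rewrite !ffunE qg. Qed.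

Lemma cols_gmap n g (Q : array4 n) : good g -> cols_quads (gmap g Q) = cols_quads Q.
Proof. case=> ig qg; rewrite /cols_quads /entry; apply: eq_forallb => i; by rewrite !ffunE qg. Qed.

Lemma diags_gmap n g (Q : array4 n) : good g -> diags_quads (gmap g Q) = diags_quads Q.
Proof. case=> ig qg; rewrite /diags_quads /entry; by rewrite !ffunE !qg. Qed.

Lemma semimagic_inv n : Pinv (@semimagic n).
Proof. move=> g Q gg; by rewrite /semimagic qs_gmap // rows_gmap // cols_gmap. Qed.

Lemma magic_inv n : Pinv (@magic n).
Proof. move=> g Q gg; by rewrite /magic semimagic_inv // diags_gmap. Qed.

Lemma strongly_inv n : Pinv (@strongly_magic n).
Proof.
move=> g Q gg; rewrite /strongly_magic qs_gmap //; congr (_ && _).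
apply: eq_forallb => p1; apply: eq_forallb => p2; apply: eq_forallb => p3; apply: eq_forallb => p4.
by rewrite !ffunE (proj2 gg).
Qed.

Lemma base_indep n (Q : array4 n) : injective Q ->
  is_quad (Q (o0, o0)) (Q (o0, o1)) (Q (o0, o2)) (Q (o0, o3)) ->
  is_quad (Q (o0, o0)) (Q (o1, o0)) (Q (o2, o0)) (Q (o3, o0)) ->
  indep5 (Phi Q).
Proof.
move=> iQ; rewrite !quadE => /eqP r0 /eqP c0.
have D : forall p q, p != q -> nat_of_ord (Q p) <> nat_of_ord (Q q).
  by move=> p q /eqP pq /val_inj /iQ.
have d0 := D (o0, o0) (o0, o1) isT.
have d1 := D (o0, o0) (o0, o2) isT.
have d2 := D (o0, o0) (o0, o3) isT.
have d3 := D (o0, o0) (o1, o0) isT.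
have d4 := D (o0, o0) (o2, o0) isT.
have d5 := D (o0, o0) (o3, o0) isT.
have d6 := D (o0, o1) (o0, o2) isT.
have d7 := D (o0, o1) (o0, o3) isT.
have d8 := D (o0, o1) (o1, o0) isT.
have d9 := D (o0, o1) (o2, o0) isT.
have d10 := D (o0, o1) (o3, o0) isT.
have d11 := D (o0, o2) (o0, o3) isT.
have d12 := D (o0, o2) (o1, o0) isT.
have d13 := D (o0, o2) (o2, o0) isT.
have d14 := D (o0, o2) (o3, o0) isT.
have d15 := D (o0, o3) (o1, o0) isT.
have d16 := D (o0, o3) (o2, o0) isT.
have d17 := D (o0, o3) (o3, o0) isT.
have d18 := D (o1, o0) (o2, o0) isT.
have d19 := D (o1, o0) (o3, o0) isT.
have d20 := D (o2, o0) (o3, o0) isT.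
move: d0 d1 d2 d3 d4 d5 d6 d7 d8 d9 d10 d11 d12 d13 d14 d15 d16 d17 d18 d19 d20; rewrite r0 c0 => d0 d1 d2 d3 d4 d5 d6 d7 d8 d9 d10 d11 d12 d13 d14 d15 d16 d17 d18 d19 d20.
clear r0 c0 D.
rewrite /indep5 /indep4 /indep3 /indep2 /list4 /list8 /Phi /= !inE !negb_or.
splitgoal; try done; neqgoal.
Qed.

Definition t0 n : T5 n := ((((cd n 0, cd n 1), cd n 2), cd n 4), cd n 8).

Lemma forall4 (P : pred 'I_4) : [forall j, P j] = [&& P o0, P o1, P o2 & P o3].
Proof.
apply/forallP/and4P => [H|[h0 h1 h2 h3] [[|[|[|[|j]]]] hj]] //.
- have -> : Ordinal hj = o0 by apply: val_inj.  done.
- have -> : Ordinal hj = o1 by apply: val_inj.  done.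
- have -> : Ordinal hj = o2 by apply: val_inj.  done.
- have -> : Ordinal hj = o3 by apply: val_inj.  done.
Qed.

Lemma ord_eqE m (x y : 'I_m) : (x == y) = (nat_of_ord x == nat_of_ord y).
Proof. by []. Qed.

Lemma typeC_Phi n (hn : 4 <= n) (Q : array4 n) :
  is_quad (Q (o0, o0)) (Q (o0, o1)) (Q (o0, o2)) (Q (o0, o3)) ->
  is_quad (Q (o0, o0)) (Q (o1, o0)) (Q (o2, o0)) (Q (o3, o0)) ->
  typeC Q = (Phi Q == t0 n).
Proof.
rewrite !quadE => /eqP r0 /eqP c0.
rewrite /typeC !forall4 /entry /Phi /t0 /= !xpair_eqE !ord_eqE !vcd // r0 c0 (_ : 4 * 0 = 0) // (_ : 4 * 1 = 4) // (_ : 4 * 2 = 8) // (_ : 4 * 3 = 12) //.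
apply/idP/idP.
- case/andP => /and4P [/eqP a0 /eqP a1 /eqP a2 _] /and4P [_ /eqP a3 /eqP a4 _].
  by rewrite a0 a1 a2 a3 a4.
- case/andP => /andP [/andP [/andP [/eqP a0 /eqP a1] /eqP a2] /eqP a3] /eqP a4.
  by rewrite a0 a1 a2 a3 a4.
Qed.

Definition Pbase n (P : pred (array4 n)) := forall Q, P Q ->
  [/\ injective Q, is_quad (Q (o0, o0)) (Q (o0, o1)) (Q (o0, o2)) (Q (o0, o3))
    & is_quad (Q (o0, o0)) (Q (o1, o0)) (Q (o2, o0)) (Q (o3, o0))].

Lemma semimagic_base n : Pbase (@semimagic n).
Proof.
move=> Q /andP [/andP [/injectiveP iQ /forallP R] /forallP C]; split => //.
- exact: (R o0).
- exact: (C o0).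
Qed.

Lemma magic_base n : Pbase (@magic n).
Proof. by move=> Q /andP [/semimagic_base H _]. Qed.

Lemma strongly_base n : Pbase (@strongly_magic n).
Proof.
move=> Q /andP [/injectiveP iQ /forallP H]; split => //.
- move: (H (o0, o0)) => /forallP /(_ (o0, o1)) /forallP /(_ (o0, o2)) /forallP /(_ (o0, o3)) /implyP.
  by apply.
- move: (H (o0, o0)) => /forallP /(_ (o1, o0)) /forallP /(_ (o2, o0)) /forallP /(_ (o3, o0)) /implyP.
  by apply.
Qed.

Lemma lb n (w : card n) (s : seq (card n)) k :
  (forall m, m < 2 ^ k -> m \in map val s) -> w \notin s -> 2 ^ k <= w.
Proof.
move=> H; rewrite leqNgt; apply: contra => /H.
by rewrite (mem_map val_inj).
Qed.

Lemma vcdn n m : 4 <= n -> m < 16 -> nat_of_ord (cd n m) = m.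
Proof. exact: vcd. Qed.
Definition FF n (P : pred (array4 n)) (t : T5 n) := #|[pred Q : array4 n | P Q && (Phi Q == t)]|.

Lemma reach n (hn : 4 <= n) (P : pred (array4 n)) (HP : Pinv P) t :
  indep5 t -> FF P t = FF P (t0 n).
Proof.
have h16 : 16 <= 2 ^ n by rewrite -[16]/(2 ^ 4) leq_exp2l.
case: t => [[[[a b] c] d] e] It.
have Hf0 : forall x, x < 2 ^ n -> tr a x < 2 ^ n by move=> x hx; apply: lxor_lt.
have gg0 : good (liftc Hf0) by apply: good_lift => [x|a' b' c' d']; [exact: tr_inv|exact: tr_quad].
rewrite /FF -(@Finv n P _ _ HP gg0) -/(FF _ _).
rewrite -(indep5_map _ gg0) in It.
have ga : liftc Hf0 a = cd n 0 by apply: val_inj; rewrite vcd //= /tr Nat.lxor_nilpotent.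
rewrite /= ga in It *.
move: (liftc Hf0 b) (liftc Hf0 c) (liftc Hf0 d) (liftc Hf0 e) It => {ga gg0 Hf0 a b c d e} b c d e It.
have lb1 : 2 ^ 0 <= b.
  move: It => /andP [/andP [/andP [H _] _] _].
  apply: (lb _ H) => m; rewrite expn0 /= vcdn //; by case: m.
have [g [gg [gw gx]]] := step (leq_trans (isT : 0 < 4) hn) lb1.
rewrite /FF -(@Finv n P g _ HP gg) -/(FF _ _).
rewrite -(indep5_map _ gg) in It.
rewrite /= gw (gx (cd n 0)) ?vcdn // expn0 in It *.
move: (g c) (g d) (g e) It => {gw gx gg g lb1 b c d e} c d e It.
have lb2 : 2 ^ 1 <= c.
  move: It => /andP [/andP [/andP [_ H] _] _].
  apply: (lb _ H) => m; rewrite expn1 /= !vcdn //; by case: m => [|[|m]].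
have [g [gg [gw gx]]] := step (leq_trans (isT : 1 < 4) hn) lb2.
rewrite /FF -(@Finv n P g _ HP gg) -/(FF _ _).
rewrite -(indep5_map _ gg) in It.
rewrite /= gw (gx (cd n 0)) ?vcdn // (gx (cd n 1)) ?vcdn // expn1 in It *.
move: (g d) (g e) It => {gw gx gg g lb2 c d e} d e It.
have lb3 : 2 ^ 2 <= d.
  move: It => /andP [/andP [_ H] _].
  apply: (lb _ H) => m; rewrite /= !vcdn //; by case: m => [|[|[|[|m]]]].
have [g [gg [gw gx]]] := step (leq_trans (isT : 2 < 4) hn) lb3.
rewrite /FF -(@Finv n P g _ HP gg) -/(FF _ _).
rewrite -(indep5_map _ gg) in It.
rewrite /= gw (gx (cd n 0)) ?vcdn // (gx (cd n 1)) ?vcdn // (gx (cd n 2)) ?vcdn // in It *.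
move: (g e) It => {gw gx gg g lb3 d e} e It.
have lb4 : 2 ^ 3 <= e.
  move: It => /andP [_ H].
  apply: (lb _ H) => m; rewrite /= !vcdn //; by case: m => [|[|[|[|[|[|[|[|m]]]]]]]].
have [g [gg [gw gx]]] := step (leq_trans (isT : 3 < 4) hn) lb4.
rewrite /FF -(@Finv n P g _ HP gg) -/(FF _ _).
rewrite /= gw (gx (cd n 0)) ?vcdn // (gx (cd n 1)) ?vcdn // (gx (cd n 2)) ?vcdn // (gx (cd n 4)) ?vcdn //.
Qed.

Lemma count_main n (hn : 4 <= n) (P : pred (array4 n)) (HP : Pinv P) (HB : Pbase P) :
  #|[pred Q : array4 n | P Q]| =
  2 ^ n * (2 ^ n - 1) * (2 ^ n - 2) * (2 ^ n - 4) * (2 ^ n - 8) *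
  #|[pred Q : array4 n | P Q && typeC Q]|.
Proof.
rewrite -sum1_card.
rewrite (partition_big (@Phi n) (@indep5 n)); last first.
  by move=> Q /HB [iQ r0 c0]; apply: base_indep.
rewrite (eq_bigr (fun _ => FF P (t0 n))); last first.
  move=> t It; rewrite -(reach hn HP It) /FF -sum1_card.
  by apply: eq_bigl => Q.
rewrite sum_nat_const card_indep5; congr (_ * _).
rewrite /FF; apply: eq_card => Q; rewrite !inE.
case PQ: (P Q) => //=.
by case: (HB Q PQ) => _ r0 c0; rewrite typeC_Phi.
Qed.

Theorem mainTheorem1 (n : nat) (hn : 4 <= n) :
  let N := 2 ^ n in
  let c := N * (N - 1) * (N - 2) * (N - 4) * (N - 8) in
  #|[pred Q : array4 n | semimagic Q]| = c * #|[pred Q : array4 n | semimagic Q && typeC Q]|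
  /\ #|[pred Q : array4 n | magic Q]| = c * #|[pred Q : array4 n | magic Q && typeC Q]|
  /\ #|[pred Q : array4 n | strongly_magic Q]|
       = c * #|[pred Q : array4 n | strongly_magic Q && typeC Q]|.
Proof.
move=> N c; split; [|split].
- exact: (count_main hn (@semimagic_inv n) (@semimagic_base n)).
- exact: (count_main hn (@magic_inv n) (@magic_base n)).
- exact: (count_main hn (@strongly_inv n) (@strongly_base n)).
Qed.
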